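(* Fix $\sigma\in\mathcal A$ and a probability vector $\mathbf p$ with strictly positive entries. There exists a constant $C>1$ depending only on the sponge $F$ such that for all $\mathbf i\in\Sigma$, $0<R\le1$ and $r<\lambda_{\min}R$ for which $\mathbf i$ determines a $\sigma$-ordered cube both at scale $R$ and at scale $r$, \[ C^{-1}\Big(\frac Rr\Big)^{\underline S(\mathbf p,\sigma)}\le\frac{\mu_{\mathbf p}(B_{\mathbf i}(R))}{\mu_{\mathbf p}(B_{\mathbf i}(r))}\le C\Big(\frac Rr\Big)^{\overline S(\mathbf p,\sigma)}. \]
   Context: Setting: $\mathcal I=\{1,\dots,N\}$, $f_i(x)=A_ix+t_i$ on $\mathbb R^d$ with $A_i=\mathrm{diag}(\lambda_i^{(1)},\dots,\lambda_i^{(d)})$, all $\lambda_i^{(n)}\in(0,1)$, $f_i([0,1]^d)\subset[0,1]^d$, no two maps agree on $[0,1]^d$, and for all $m\ne n$ some $i$ has $\lambda_i^{(n)}\ne\lambda_i^{(m)}$; $F$ is the attractor. $\lambda_{\min}=\min_{i,n}\lambda_i^{(n)}$. $\Sigma=\mathcal I^{\mathbb N}$, $\mu_{\mathbf p}=\mathbf p^{\mathbb N}$. For $\mathbf i\in\Sigma$, $r>0$, $L_{\mathbf i}(r,n)$ is the unique integer with $\prod_{\ell=1}^{L_{\mathbf i}(r,n)}\lambda_{i_\ell}^{(n)}\le r<\prod_{\ell=1}^{L_{\mathbf i}(r,n)-1}\lambda_{i_\ell}^{(n)}$. $\mathbf i$ determines a $\sigma$-ordered cube at scale $r$ if $L_{\mathbf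 i}(r,\sigma_d)\le\dots\le L_{\mathbf i}(r,\sigma_1)$, ties resolved by: if coordinates $k<m$ have $L_{\mathbf i}(r,k)=L_{\mathbf i}(r,m)$ then $k$ precedes $m$ iff $\prod_{\ell=1}^{L_{\mathbf i}(r,k)}\lambda_{i_\ell}^{(k)}\ge\prod_{\ell=1}^{L_{\mathbf i}(r,k)}\lambda_{i_\ell}^{(m)}$. $\mathcal A$ is the set of $\sigma$ realised in this way by some $\mathbf i,r$. $E_n^\sigma$: span of coordinate axes $\sigma_1,\dots,\sigma_n$; $f_i,f_j$ overlap exactly on $E_n^\sigma$ if their orthogonal projections onto $E_n^\sigma$ agree on $[0,1]^d$. For $1\le n\le d-1$, $\mathcal I_n^\sigma$ is the set of $j$ such that no $i<j$ overlaps exactly with $j$ on $E_n^\sigma$; $\mathcal I_d^\sigma=\mathcal I$; $\Pi_n^\sigma j$ is the unique element of $\mathcal I_n^\sigma$ overlapping exactly with $j$ on $E_n^\sigma$ ($\Pi_d^\sigma=\mathrm{id}$, $\Pi_0^\sigma j=\emptyset$), extended to $\Sigma$ coordinatewise. $p_n^\sigma(i)=\sum_{j:\Pi_n^\sigma j=i}p(j)$, $p_0^\sigma(\emptyset)=1$, $P^\sigma_{n-1}(i)=p_n^\sigma(i)/p^\sigma_{n-1}(\Pi^\sigma_{n-1}i)$ for $i\in\mathcal I_n^\sigma$. $\overline S(\mathbf p,\sigma)=\sum_{n=1}^d\max_{i\in\mathcal I_n^\sigma}\frac{\log P^\sigma_{n-1}(i)}{\log\lambda_i^{(\sigma_n)}}$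 and $\underline S(\mathbf p,\sigma)$ is the same with $\min$. $B_{\mathbf i}(r)=\{\mathbf j\in\Sigma:|\Pi_n^\sigma\mathbf j\wedge\Pi_n^\sigma\mathbf i|\ge L_{\mathbf i}(r,\sigma_n)\ \forall n\}$, where $\sigma$ is the ordering of the cube determined by $\mathbf i$ at scale $r$ and $\wedge$ denotes the longest common prefix. *)

(* Defs.v *)
From HB Require Import structures.
From mathcomp Require Import all_boot all_order all_algebra perm.
From mathcomp Require Import all_classical all_reals all_analysis.
Set Implicit Arguments. Unset Strict Implicit. Unset Printing Implicit Defensive.
Import Order.TTheory GRing.Theory Num.Theory.
Local Open Scope ring_scope.

Section Sponge.
Variables (R : realType) (N d : nat).
(* maps f_i(x) = A_i x + t_i, A_i = diag(lam i 0, ..., lam i (d-1)) ;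
   indices 0-based: symbols 1..N are 'I_N, coordinates 1..d are 'I_d. *)
Variables (lam t : 'I_N -> 'I_d -> R).

Definition fmap (i : 'I_N) (x : 'I_d -> R) : 'I_d -> R :=
  fun n => lam i n * x n + t i n.

Definition in_cube (x : 'I_d -> R) : Prop := forall n, 0 <= x n <= 1.

Definition sponge_hyp : Prop :=
  [/\ (forall i n, 0 < lam i n < 1),
      (forall i x, in_cube x -> in_cube (fmap i x)),
      (forall i j, i != j -> exists2 x, in_cube x & fmap i x <> fmap j x)
    & (forall m n : 'I_d, m != n -> exists i, lam i n != lam i m)].

Definition lam_min : R := \big[Num.min/1]_(i : 'I_N) \big[Num.min/1]_(n : 'I_d) lam i n.

(* symbolic space Sigma = I^N (sequences indexed from 0) *)
Definition seqI := nat -> 'I_N.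

Definition cprod (ii : seqI) (L : nat) (n : 'I_d) : R := \prod_(l < L) lam (ii l) n.

(* L_i(r,n): the integer L with prod_{l<=L} lam <= r < prod_{l<=L-1} lam
   (1-based in the paper; here l ranges over 0..L-1).  For r >= 1 the
   convention L = 0 is used (empty product = 1 <= r). *)
Definition isL (ii : seqI) (r : R) (n : 'I_d) (L : nat) : Prop :=
  cprod ii L n <= r /\ ((0 < L)%N -> r < cprod ii L.-1 n).

(* the unique such integer (exists and is unique for r > 0) *)
Definition Lf (ii : seqI) (r : R) (n : 'I_d) : nat := xget 0%N [set L | isL ii r n L].

(* sigma_n (1-based) is sigma (n-1) here. *)
Definition sigma_ordered (s : {perm 'I_d}) (ii : seqI) (r : R) : Prop :=
  forall a b : 'I_d, (a < b)%N ->
    ((Lf ii r (s b) <= Lf ii r (s a))%N /\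
    (Lf ii r (s a) = Lf ii r (s b) :> nat ->
       if (s a < s b)%N
       then cprod ii (Lf ii r (s a)) (s b) <= cprod ii (Lf ii r (s a)) (s a)
       else cprod ii (Lf ii r (s b)) (s b) < cprod ii (Lf ii r (s b)) (s a))).

Definition realised (s : {perm 'I_d}) : Prop :=
  exists (ii : seqI) (r : R), 0 < r /\ sigma_ordered s ii r.

Definition overlap (s : {perm 'I_d}) (n : nat) (i j : 'I_N) : Prop :=
  forall x, in_cube x -> forall a : 'I_d, (a < n)%N -> fmap i x (s a) = fmap j x (s a).

Definition Iset (s : {perm 'I_d}) (n : nat) (j : 'I_N) : bool :=
  if n == d then true
  else [forall i : 'I_N, (i < j)%N ==> ~~ `[< overlap s n i j >] ].

Definition Pi (s : {perm 'I_d}) (n : nat) (j : 'I_N) : 'I_N :=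
  if n == d then j
  else odflt j [pick i | Iset s n i && `[< overlap s n i j >] ].

Variable p : 'I_N -> R.

Definition pn (s : {perm 'I_d}) (n : nat) (i : 'I_N) : R :=
  if n == 0%N then 1 else \sum_(j | Pi s n j == i) p j.

(* P_{n-1}^sigma(i) = p_n(i) / p_{n-1}(Pi_{n-1} i), for n >= 1 *)
Definition Pcond (s : {perm 'I_d}) (n : nat) (i : 'I_N) : R :=
  pn s n i / pn s n.-1 (Pi s n.-1 i).

(* the n-th summand (n = k+1), evaluated at i *)
Definition Sterm (s : {perm 'I_d}) (k : 'I_d) (i : 'I_N) : R :=
  ln (Pcond s k.+1 i) / ln (lam i (s k)).

Definition seq_max (xs : seq R) : R := \big[Num.max/head 0 xs]_(x <- xs) x.
Definition seq_min (xs : seq R) : R := \big[Num.min/head 0 xs]_(x <- xs) x.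

Definition Supper (s : {perm 'I_d}) : R :=
  \sum_(k < d) seq_max [seq Sterm s k i | i <- enum (Iset s k.+1)].
Definition Slower (s : {perm 'I_d}) : R :=
  \sum_(k < d) seq_min [seq Sterm s k i | i <- enum (Iset s k.+1)].

(* B_i(r) depends only on the first M = max_n L_i(r,n) coordinates; its
   Bernoulli measure mu_p is the mass of the corresponding cylinder words. *)
Definition Mdepth (ii : seqI) (r : R) : nat := \max_(n : 'I_d) Lf ii r n.

Definition inB (s : {perm 'I_d}) (ii : seqI) (r : R) (M : nat) (w : {ffun 'I_M -> 'I_N}) : bool :=
  [forall k : 'I_d, forall l : 'I_M,
     (l < Lf ii r (s k))%N ==> (Pi s k.+1 (w l) == Pi s k.+1 (ii l))].

Definition muB (s : {perm 'I_d}) (ii : seqI) (r : R) : R :=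
  \sum_(w : {ffun 'I_(Mdepth ii r) -> 'I_N} | inB s ii r w) \prod_(l < Mdepth ii r) p (w l).

End Sponge.

(* Main.v *)
Set Warnings "-all".
Require Import Defs.
From HB Require Import structures.
From mathcomp Require Import all_boot all_order all_algebra perm.
From mathcomp Require Import all_classical all_reals all_analysis.
From mathcomp Require Import lra.
Import Order.TTheory GRing.Theory Num.Theory.
Local Open Scope ring_scope.
Set Implicit Arguments. Unset Strict Implicit.

Section Aux.
Variables (R : realType) (N d : nat) (lam t : 'I_N -> 'I_d -> R).
Variable (s : {perm 'I_d}) (p : 'I_N -> R).

Local Notation PI := (Pi lam t s).
Local Notation OV := (overlap lam t s).
Local Notation IS := (Iset lam t s).

Lemma ov_refl n i : OV n i i. Proof. by move=> x _ a _. Qed.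
Lemma ov_sym n i j : OV n i j -> OV n j i.
Proof. by move=> h x hx a ha; rewrite (h x hx a ha). Qed.
Lemma ov_trans n i j k : OV n i j -> OV n j k -> OV n i k.
Proof. by move=> h1 h2 x hx a ha; rewrite (h1 x hx a ha) (h2 x hx a ha). Qed.
Lemma ov_mono n m i j : (n <= m)%N -> OV m i j -> OV n i j.
Proof. by move=> nm h x hx a ha; apply: h => //; apply: leq_trans nm. Qed.

Lemma F1 n j : n != d -> IS n (PI n j) /\ OV n (PI n j) j.
Proof.
move=> nd; rewrite /Pi (negbTE nd).
case: pickP => [i /andP [hi /asboolP ho] | none] //=.
exfalso.
have hj : `[< OV n j j >] by apply/asboolP; apply: ov_refl.
case: (@arg_minnP _ j (fun i => `[< OV n i j >]) (fun i : 'I_N => nat_of_ord i) hj) => i0 h0b hmin.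
move/asboolP: (h0b) => h0.
move: (none i0); rewrite h0b andbT => /negbT/negP; apply.
rewrite /Iset (negbTE nd); apply/forallP => i; apply/implyP => lt.
apply/negP => /asboolP hov.
have : `[< OV n i j >] by apply/asboolP; exact: ov_trans hov h0.
move=> /hmin; rewrite leqNgt lt //.
Qed.

Lemma F2 n i i' : n != d -> IS n i -> IS n i' -> OV n i i' -> i = i'.
Proof.
move=> nd; rewrite /Iset (negbTE nd) => /forallP h1 /forallP h2 ho.
case: (ltngtP i i') => c.
- by exfalso; move: (h2 i); rewrite c /= => /negP; apply; apply/asboolP.
- by exfalso; move: (h1 i'); rewrite c /= => /negP; apply; apply/asboolP; apply: ov_sym.
- exact: val_inj.
Qed.

Lemma Pi_IS n j : (n <= d)%N -> IS n (PI n j).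
Proof.
move=> nd; case: (eqVneq n d) => [->|ne]; last exact: (F1 j ne).1.
by rewrite /Iset eqxx.
Qed.

Lemma Pi_id n i : IS n i -> PI n i = i.
Proof.
case: (eqVneq n d) => [->|ne]; first by rewrite /Pi eqxx.
move=> hi; have [h1 h2] := F1 i ne; exact: F2 ne h1 hi h2.
Qed.

Lemma Pi_coarse n m j j' : (n <= m)%N -> (m <= d)%N -> PI m j = PI m j' -> PI n j = PI n j'.
Proof.
move=> nm md.
case: (eqVneq m d) => [me|mne].
  by rewrite /Pi me eqxx => ->.
have nne : n != d by apply: contra_neq mne => e; apply/eqP; rewrite eqn_leq md -e nm.
have [_ o1] := F1 j mne; have [_ o2] := F1 j' mne.
move=> e; rewrite e in o1.
have ojj : OV m j j' by apply: ov_trans (ov_sym o1) o2.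
have [i1 p1] := F1 j nne; have [i2 p2] := F1 j' nne.
apply: F2 nne i1 i2 _.
apply: ov_trans p1 _; apply: ov_trans _ (ov_sym p2); exact: ov_mono nm ojj.
Qed.

Lemma Pi_comp n m j : (n <= m)%N -> (m <= d)%N -> PI n (PI m j) = PI n j.
Proof.
move=> nm md; apply: (Pi_coarse nm md); apply: Pi_id; exact: (Pi_IS _ md).
Qed.

Lemma Pi_lam m k j : (k < m)%N -> (m <= d)%N -> forall kk : 'I_d, nat_of_ord kk = k ->
  lam (PI m j) (s kk) = lam j (s kk).
Proof.
move=> km md kk e.
case: (eqVneq m d) => [me|mne]; first by rewrite /Pi me eqxx.
have [_ o] := F1 j mne.
have c0 : in_cube (fun _ : 'I_d => 0 : R) by move=> n; rewrite lexx ler01.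
have c1 : in_cube (fun _ : 'I_d => 1 : R) by move=> n; rewrite lexx ler01.
have h0 := o _ c0 kk; have h1 := o _ c1 kk.
rewrite e in h0 h1; move: (h0 km) (h1 km); rewrite /Defs.fmap !mulr0 !mulr1 !add0r => ->.
by move/addIr.
Qed.


Hypothesis Hp_pos : forall i, 0 < p i.
Hypothesis Hp_sum : \sum_i p i = 1.

Local Notation PN := (pn lam t p s).
Local Notation PC := (Pcond lam t p s).

Definition Am (m : nat) (y : 'I_N) : pred 'I_N :=
  [pred x | [forall k : 'I_d, (k < m)%N ==> (PI k.+1 x == PI k.+1 y)]].

Lemma pn_pos m y : 0 < PN m (PI m y).
Proof.
rewrite /pn; case: ifP => _ //; rewrite (bigD1 y) //=.
apply: (lt_le_trans (Hp_pos y)); rewrite lerDl; apply: sumr_ge0 => i _; exact: ltW.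
Qed.

Lemma sumA m y : (m <= d)%N -> \sum_(x | Am m y x) p x = PN m (PI m y).
Proof.
move=> md; rewrite /pn; case: eqP => [m0|/eqP m0].
  rewrite -Hp_sum; apply: eq_bigl => x; subst m; apply/forallP => k //.
apply: eq_bigl => x /=; apply/forallP/eqP.
  case: m md m0 => [//|m'] md _ h.
  by move: (h (Ordinal md)) => /= /implyP /(_ (ltnSn _)) /eqP.
move=> e k; apply/implyP => km; apply/eqP; exact: (Pi_coarse km md).
Qed.

Lemma tele m y : (m <= d)%N -> PN m (PI m y) = \prod_(k < m) PC k.+1 (PI k.+1 y).
Proof.
elim: m => [|m IH] md; first by rewrite big_ord0.
rewrite big_ord_recr /= -IH ?(ltnW md) // /Pcond.
have -> : PN m (PI m (PI m.+1 y)) = PN m (PI m y).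
  case: (eqVneq m 0%N) => [->|_]; first by [].
  by rewrite (Pi_comp _ (leqnSn m) md).
by rewrite mulrC divfK // gt_eqF // pn_pos.
Qed.

Lemma PC_pos k y : 0 < PC k.+1 (PI k.+1 y).
Proof. by rewrite /Pcond divr_gt0 // pn_pos. Qed.

Lemma PC_le1 k i : (k < d)%N -> IS k.+1 i -> PC k.+1 i <= 1.
Proof.
move=> kd hi; rewrite /Pcond.
have e : PN k.+1 i = PN k.+1 (PI k.+1 i) by rewrite Pi_id.
have hpos := pn_pos k i.
rewrite e ler_pdivrMr // mul1r -(sumA (m:=k.+1)) // -(sumA (m:=k)) ?(ltnW kd) //.
rewrite [X in X <= _]big_mkcond [X in _ <= X]big_mkcond /=.
apply: ler_sum => x _.
case: ifP => h1; case: ifP => h2 //; last exact: ltW.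
exfalso; move/negbT/negP: h2; apply; apply/forallP => kk; apply/implyP => lt.
by move/forallP: h1 => /(_ kk) /implyP; apply; apply: ltnW.
Qed.

End Aux.

Lemma le_bigmax_gen (R : realType) (I : finType) (F : I -> R) x0 i :
  F i <= \big[Num.max/x0]_j F j.
Proof. by rewrite (bigD1 i) //= le_max lexx. Qed.

Lemma bigmin_le_gen (R : realType) (I : finType) (F : I -> R) x0 i :
  \big[Num.min/x0]_j F j <= F i.
Proof. by rewrite (bigD1 i) //= ge_min lexx. Qed.

Lemma le_seqmax (R : realType) (xs : seq R) x0 x : x \in xs -> x <= \big[Num.max/x0]_(y <- xs) y.
Proof.
elim: xs => [//|a xs IH]; rewrite in_cons big_cons => /orP [/eqP ->|h].
  by rewrite le_max lexx.
by rewrite le_max IH ?orbT.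
Qed.

Lemma ge_seqmin (R : realType) (xs : seq R) x0 x : x \in xs -> \big[Num.min/x0]_(y <- xs) y <= x.
Proof.
elim: xs => [//|a xs IH]; rewrite in_cons big_cons => /orP [/eqP ->|h].
  by rewrite ge_min lexx.
by rewrite ge_min IH ?orbT.
Qed.

Lemma seqmax_ge0 (R : realType) (xs : seq R) : (forall x, x \in xs -> 0 <= x) -> 0 <= seq_max xs.
Proof.
move=> h; rewrite /seq_max big_seq; apply: (big_ind (fun x => 0 <= x)).
- by case: xs h => [//|a xs] h /=; apply: h; rewrite mem_head.
- by move=> x y hx hy; rewrite le_max hx.
- by move=> x hx; apply: h.
Qed.

Lemma seqmin_ge0 (R : realType) (xs : seq R) : (forall x, x \in xs -> 0 <= x) -> 0 <= seq_min xs.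
Proof.
move=> h; rewrite /seq_min big_seq; apply: (big_ind (fun x => 0 <= x)).
- by case: xs h => [//|a xs] h /=; apply: h; rewrite mem_head.
- by move=> x y hx hy; rewrite le_min hx.
- by move=> x hx; apply: h.
Qed.

Lemma addr_le0' (R : realType) (x y : R) : x <= 0 -> y <= 0 -> x + y <= 0.
Proof. by move=> hx hy; rewrite -[0]addr0 lerD. Qed.

Section Logs.
Variables (R : realType) (N d : nat) (lam : 'I_N -> 'I_d -> R).
Hypothesis Hlam : forall i n, 0 < lam i n < 1.

Definition cl (ii : seqI N) (n : 'I_d) (L : nat) : R := \sum_(0 <= l < L) ln (lam (ii l) n).

Lemma lam_pos i n : lam i n \in Num.pos.
Proof. by rewrite posrE; case/andP: (Hlam i n). Qed.

Lemma ln_lam_lt0 i n : ln (lam i n) < 0.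
Proof. exact: ln_lt0. Qed.

Lemma cprodE ii L n : cprod lam ii L n = expR (cl ii n L).
Proof.
rewrite /cprod /cl big_mkord expR_sum; apply: eq_bigr => l _.
by rewrite lnK // lam_pos.
Qed.

Lemma lmin_le i n : lam_min lam <= lam i n.
Proof.
rewrite /lam_min.
have h := bigmin_le_gen (fun j => \big[Num.min/1]_(n0 : 'I_d) lam j n0) 1 i.
apply: (le_trans h); exact: bigmin_le_gen.
Qed.

Lemma lmin_pos : 0 < lam_min lam.
Proof.
rewrite /lam_min; apply: (big_ind (fun x => 0 < x)) => //; first by move=> x y hx hy; rewrite lt_min hx.
move=> i _; apply: (big_ind (fun x => 0 < x)) => //; first by move=> x y hx hy; rewrite lt_min hx.
by move=> n _; case/andP: (Hlam i n).
Qed.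

Lemma lmin_le1 : lam_min lam <= 1.
Proof.
rewrite /lam_min; apply: (big_ind (fun x => x <= 1)) => //; first by move=> x y hx hy; rewrite ge_min hx.
move=> i _; apply: (big_ind (fun x => x <= 1)) => //; first by move=> x y hx hy; rewrite ge_min hx.
by move=> n _; case/andP: (Hlam i n) => _ /ltW.
Qed.

Lemma cl_mono ii n a b : (a <= b)%N -> cl ii n b <= cl ii n a.
Proof.
move=> ab; rewrite /cl (big_cat_nat (leq0n a) ab) /= gerDl.
by apply: (big_ind (fun x => x <= 0)) => //; [move=> x y hx hy; apply: addr_le0' | move=> l _; apply: ltW; apply: ln_lam_lt0].
Qed.

Lemma le_expR_ln (a r : R) : 0 < r -> (expR a <= r) = (a <= ln r).
Proof. by move=> r0; rewrite -{1}(lnK (x:=r)) ?posrE // ler_expR. Qed.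
Lemma lt_ln_expR (a r : R) : 0 < r -> (r < expR a) = (ln r < a).
Proof. by move=> r0; rewrite -{1}(lnK (x:=r)) ?posrE // ltr_expR. Qed.

Lemma isL_log ii r n L : 0 < r ->
  isL lam ii r n L <-> (cl ii n L <= ln r /\ ((0 < L)%N -> ln r < cl ii n L.-1)).
Proof. by move=> r0; rewrite /isL !cprodE le_expR_ln // lt_ln_expR. Qed.

Lemma isL_exists ii r n : 0 < r -> r <= 1 -> exists L, isL lam ii r n L.
Proof.
move=> r0 r1.
pose mu := \big[Num.max/0]_i lam i n.
have mu1 : mu < 1.
  rewrite /mu; apply: (big_ind (fun x => x < 1)) => //; first by move=> x y hx hy; rewrite gt_max hx.
  by move=> i _; case/andP: (Hlam i n).
have mu0 : 0 < mu.
  apply: lt_le_trans (le_bigmax_gen _ _ (ii 0%N)); by case/andP: (Hlam (ii 0%N) n).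
have lmu : ln mu < 0 by apply: ln_lt0; rewrite mu0.
have clb L : cl ii n L <= ln mu *+ L.
  rewrite /cl -[X in _ <= _ *+ X]subn0 -sumr_const_nat; apply: ler_sum => l _.
  by rewrite ler_ln ?lam_pos ?posrE // le_bigmax_gen.
have lr : ln r <= 0 by apply: ln_le0.
have [L HL] : exists L, cl ii n L <= ln r.
  exists (Num.Def.archi_bound (ln r / ln mu)).
  have h0 : 0 <= ln r / ln mu by apply: mulr_le0 => //; rewrite ltW // invr_lt0.
  have := archi_boundP h0.
  rewrite ltr_ndivrMr // mulr_natl => h.
  apply: le_trans (clb _) _; exact: ltW.
have exP : exists L, (fun L => cl ii n L <= ln r) L by exists L.
case: (ex_minnP exP) => L0 h0 hmin.
exists L0; apply/isL_log => //; split => // L0pos.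
rewrite ltNge; apply/negP => h; move: (hmin _ h).
by rewrite -{1}(prednK L0pos) ltnn.
Qed.

Lemma Lf_isL ii r n : 0 < r -> r <= 1 -> isL lam ii r n (Lf lam ii r n).
Proof. by move=> r0 r1; rewrite /Lf; apply: xgetPex; apply: isL_exists. Qed.

Lemma cl_bounds ii r n L : 0 < r -> r <= 1 -> isL lam ii r n L ->
  ln r + ln (lam_min lam) <= cl ii n L <= ln r.
Proof.
move=> r0 r1 /(isL_log _ _ _ r0) [h1 h2]; rewrite h1 andbT.
case: L h1 h2 => [|L] h1 h2.
  rewrite /cl big_geq //; apply: addr_le0'; apply: ln_le0 => //; exact: lmin_le1.
rewrite /cl big_nat_recr //= -/(cl ii n L).
have := h2 isT => /= h.
apply: lerD; first exact: ltW.
rewrite ler_ln; [exact: lmin_le | by rewrite posrE lmin_pos | exact: lam_pos].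
Qed.

Lemma Lf_mono ii r R' n : 0 < r -> r < R' -> R' <= 1 -> (Lf lam ii R' n <= Lf lam ii r n)%N.
Proof.
move=> r0 rR R1.
have R0 : 0 < R' by apply: lt_trans rR.
have r1 : r <= 1 by apply: ltW; apply: lt_le_trans R1.
have /(isL_log _ _ _ R0) [_ hR] := Lf_isL ii n R0 R1.
have /(isL_log _ _ _ r0) [hr _] := Lf_isL ii n r0 r1.
rewrite leqNgt; apply/negP => lt.
have pos : (0 < Lf lam ii R' n)%N by apply: leq_ltn_trans lt.
have := hR pos.
have m : cl ii n (Lf lam ii R' n).-1 <= cl ii n (Lf lam ii r n).
  by apply: cl_mono; rewrite -ltnS prednK.
have lnrR : ln r < ln R' by rewrite ltr_ln ?posrE.
move=> h; have := lt_trans (le_lt_trans (le_trans m hr) lnrR) h.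
by rewrite ltxx.
Qed.

End Logs.

Lemma antitone_split d (P : 'I_d -> bool) :
  (forall a b : 'I_d, (a < b)%N -> P b -> P a) ->
  exists2 m, (m <= d)%N & forall k : 'I_d, P k = (k < m)%N.
Proof.
move=> anti; exists (\max_(k : 'I_d | P k) k.+1).
  by apply/bigmax_leqP => k _; exact: ltn_ord.
move=> k; apply/idP/idP => [Pk|].
  by move: (@leq_bigmax_cond _ P (fun k : 'I_d => (nat_of_ord k).+1) k Pk).
apply: contraLR => nPk; rewrite -leqNgt; apply/bigmax_leqP => k' Pk'.
case: (ltnP k' k) => // le.
case: (eqVneq k k') => [e|ne]; first by rewrite e Pk' in nPk.
have lt : (k < k')%N by rewrite ltn_neqAle le andbT; apply: contra ne => /eqP e; apply/eqP/val_inj.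
by rewrite (anti _ _ lt Pk') in nPk.
Qed.

Section Main.
Variables (R : realType) (N d : nat) (lam t : 'I_N -> 'I_d -> R).
Variable (s : {perm 'I_d}) (p : 'I_N -> R).
Hypothesis Hlam : forall i n, 0 < lam i n < 1.
Hypothesis Hp_pos : forall i, 0 < p i.
Hypothesis Hp_sum : \sum_i p i = 1.
Variable ii : seqI N.

Local Notation PI := (Pi lam t s).
Local Notation PC := (Pcond lam t p s).

Definition Q (k l : nat) : R := PC k.+1 (PI k.+1 (ii l)).

Lemma mass_l (L : 'I_d -> nat) (l : nat) (y : 'I_N) :
  (forall a b : 'I_d, (a < b)%N -> (L b <= L a)%N) ->
  \sum_(x | [forall k : 'I_d, (l < L k)%N ==> (PI k.+1 x == PI k.+1 y)]) p x =
  \prod_(k : 'I_d | (l < L k)%N) PC k.+1 (PI k.+1 y).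
Proof.
move=> anti.
have [m md hm] := antitone_split (P := fun k : 'I_d => (l < L k)%N)
  (fun a b ab h => leq_trans h (anti a b ab)).
rewrite (eq_bigl (Am lam t s m y)); last first.
  by move=> x; rewrite /Am /=; apply: eq_forallb => k; rewrite hm.
rewrite (@sumA _ _ _ lam t s p Hp_sum m y md) (@tele _ _ _ lam t s p Hp_pos m y md) (big_ord_widen _ (fun k => PC k.+1 (PI k.+1 y)) md).
by apply: eq_bigl => k; rewrite hm.
Qed.

Lemma muB_prod r : sigma_ordered lam s ii r ->
  muB lam t p s ii r = \prod_(k : 'I_d) \prod_(0 <= l < Lf lam ii r (s k)) Q k l.
Proof.
move=> hord.
pose L := fun k : 'I_d => Lf lam ii r (s k).
have anti : forall a b : 'I_d, (a < b)%N -> (L b <= L a)%N by move=> a b ab; exact: (hord a b ab).1.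
rewrite /muB; set M := Mdepth lam ii r.
have LM k : (L k <= M)%N.
 rewrite /L /M /Mdepth. exact: leq_bigmax.
pose B (l : nat) (x : 'I_N) := [forall k : 'I_d, (l < L k)%N ==> (PI k.+1 x == PI k.+1 (ii l))].
have step1 : \sum_(w : {ffun 'I_M -> 'I_N} | inB lam t s ii r w) \prod_(l < M) p (w l) =
             \prod_(l < M) \sum_(x | B l x) p x.
  rewrite (eq_bigr (fun l : 'I_M => \sum_x (if B l x then p x else 0))); last first.
    by move=> l _; rewrite big_mkcond.
  rewrite bigA_distr_bigA big_mkcond /=; apply: eq_bigr => w _.
  have e : inB lam t s ii r w = [forall l : 'I_M, B l (w l)].
    apply/forallP/forallP => h x.
      by apply/forallP => y; exact: (forallP (h y) x).
    by apply/forallP => y; exact: (forallP (h y) x).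
  rewrite e; case: forallP => [h|h].
    by apply: eq_bigr => l _; rewrite h.
  have [l hl] : exists l : 'I_M, ~~ B l (w l).
    by apply/existsP; rewrite -negb_forall; apply/forallP.
  by rewrite (bigD1 l) //= (negbTE hl) mul0r.
rewrite step1.
rewrite (eq_bigr (fun l : 'I_M => \prod_(k : 'I_d) (if (l < L k)%N then Q k l else 1))); last first.
  by move=> l _; rewrite mass_l // big_mkcond.
rewrite exchange_big /=; apply: eq_bigr => k _.
rewrite -big_mkcond /= -(big_ord_widen _ (fun l => Q k l) (LM k)).
by rewrite big_mkord.
Qed.

Local Notation Sm k l := (Sterm lam t p s k (PI (nat_of_ord k).+1 (ii l))).

Lemma ratio_eq Rb r : 0 < r -> r < Rb -> Rb <= 1 ->
  sigma_ordered lam s ii Rb -> sigma_ordered lam s ii r ->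
  muB lam t p s ii Rb / muB lam t p s ii r =
  expR (\sum_(k : 'I_d) \sum_(Lf lam ii Rb (s k) <= l < Lf lam ii r (s k))
           (Sm k l * - ln (lam (ii l) (s k)))).
Proof.
move=> r0 rR R1 oR or.
have Qpos k l : 0 < Q k l by exact: (@PC_pos _ _ _ lam t s p Hp_pos k (ii l)).
have muE rho : sigma_ordered lam s ii rho ->
    muB lam t p s ii rho = expR (\sum_(k : 'I_d) \sum_(0 <= l < Lf lam ii rho (s k)) ln (Q k l)).
  move=> o; rewrite muB_prod // expR_sum; apply: eq_bigr => k _.
  by rewrite expR_sum; apply: eq_bigr => l _; rewrite lnK // posrE.
rewrite (muE _ oR) (muE _ or) -expRN -expRD -sumrB; congr expR; apply: eq_bigr => k _.
have mono := Lf_mono Hlam ii (s k) r0 rR R1.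
rewrite (big_cat_nat (leq0n _) mono) /= opprD addrA subrr add0r -sumrN.
apply: eq_big_nat => l _.
rewrite /Sterm (@Pi_lam _ _ _ lam t s k.+1 k (ii l) (ltnSn k) (ltn_ord k) k erefl).
by rewrite mulrN divfK // ltr0_neq0 // ln_lam_lt0.
Qed.

Lemma Sterm_ge0 (k : 'I_d) i : Iset lam t s k.+1 i -> 0 <= Sterm lam t p s k i.
Proof.
move=> hi; rewrite /Sterm; apply: mulr_le0.
  by apply: ln_le0; apply: (@PC_le1 _ _ _ lam t s p Hp_pos).
by rewrite ltW // invr_lt0 ln_lam_lt0.
Qed.

Definition Mk (k : 'I_d) := seq_max [seq Sterm lam t p s k i | i <- enum (Iset lam t s k.+1)].
Definition mk (k : 'I_d) := seq_min [seq Sterm lam t p s k i | i <- enum (Iset lam t s k.+1)].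

Lemma Mk_ge0 k : 0 <= Mk k.
Proof. by apply: seqmax_ge0 => x /mapP [i hi ->]; apply: Sterm_ge0; rewrite mem_enum in hi. Qed.
Lemma mk_ge0 k : 0 <= mk k.
Proof. by apply: seqmin_ge0 => x /mapP [i hi ->]; apply: Sterm_ge0; rewrite mem_enum in hi. Qed.

Lemma T_bounds (k : 'I_d) Rb r : 0 < r -> r < Rb -> Rb <= 1 ->
  mk k * (ln Rb - ln r + ln (lam_min lam))
    <= \sum_(Lf lam ii Rb (s k) <= l < Lf lam ii r (s k)) (Sm k l * - ln (lam (ii l) (s k)))
    <= Mk k * (ln Rb - ln r - ln (lam_min lam)).
Proof.
move=> r0 rR R1.
have R0 : 0 < Rb by apply: lt_trans rR.
have r1 : r <= 1 by apply: ltW; apply: lt_le_trans R1.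
have mono := Lf_mono Hlam ii (s k) r0 rR R1.
set LR := Lf lam ii Rb (s k); set Lr := Lf lam ii r (s k).
pose D := \sum_(LR <= l < Lr) - ln (lam (ii l) (s k)).
have DE : D = cl lam ii (s k) LR - cl lam ii (s k) Lr.
  by rewrite /D /cl (big_cat_nat (leq0n _) mono) /= sumrN opprD addrA subrr add0r.
have /andP [bR1 bR2] := cl_bounds Hlam R0 R1 (Lf_isL Hlam ii (s k) R0 R1).
have /andP [br1 br2] := cl_bounds Hlam r0 r1 (Lf_isL Hlam ii (s k) r0 r1).
have mem l : Sm k l \in [seq Sterm lam t p s k i | i <- enum (Iset lam t s k.+1)].
  by apply: map_f; rewrite mem_enum; apply: Pi_IS; exact: ltn_ord.
have w0 l : 0 <= - ln (lam (ii l) (s k)) by rewrite oppr_ge0 ltW // ln_lam_lt0.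
apply/andP; split.
  apply: (@le_trans _ _ (mk k * D)).
    by apply: ler_wpM2l; [exact: mk_ge0 | rewrite DE; lra].
  rewrite /D mulr_sumr; apply: ler_sum_nat => l _; apply: ler_wpM2r => //.
  by rewrite /mk /seq_min; apply: ge_seqmin.
apply: (@le_trans _ _ (Mk k * D)).
  rewrite /D mulr_sumr; apply: ler_sum_nat => l _; apply: ler_wpM2r => //.
  by rewrite /Mk /seq_max; apply: le_seqmax.
by apply: ler_wpM2l; [exact: Mk_ge0 | rewrite DE; lra].
Qed.

End Main.

Unset Implicit Arguments.

Theorem lemma5p3 (R : realType) (N d : nat) (lam t : 'I_N -> 'I_d -> R)
    (Hsponge : sponge_hyp lam t)
    (s : {perm 'I_d}) (Hs : realised lam s)
    (p : 'I_N -> R) (Hp_pos : forall i, 0 < p i) (Hp_sum : \sum_i p i = 1) :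
  exists C : R, 1 < C /\
    forall (ii : seqI N) (Rb r : R),
      0 < Rb -> Rb <= 1 -> 0 < r -> r < lam_min lam * Rb ->
      sigma_ordered lam s ii Rb -> sigma_ordered lam s ii r ->
      C^-1 * powR (Rb / r) (Slower lam t p s)
        <= muB lam t p s ii Rb / muB lam t p s ii r
      /\ muB lam t p s ii Rb / muB lam t p s ii r
        <= C * powR (Rb / r) (Supper lam t p s).
Proof.
case: Hsponge => Hlam _ _ _.
have SuE : Supper lam t p s = \sum_(k < d) Mk lam t s p k by [].
have SlE : Slower lam t p s = \sum_(k < d) mk lam t s p k by [].
rewrite SuE SlE.
have [Su SuE'] : {Su | \sum_(k < d) Mk lam t s p k = Su} by eexists.
have [Sl SlE'] : {Sl | \sum_(k < d) mk lam t s p k = Sl} by eexists.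
have [lm lmE] : {lm | ln (lam_min lam) = lm} by eexists.
rewrite SuE' SlE'.
have lm0 : lm <= 0 by rewrite -lmE; apply: ln_le0; apply: lmin_le1.
have Su0 : 0 <= Su by rewrite -SuE'; apply: sumr_ge0 => k _; apply: (Mk_ge0 t s Hlam Hp_pos Hp_sum).
have Sl0 : 0 <= Sl by rewrite -SlE'; apply: sumr_ge0 => k _; apply: (mk_ge0 t s Hlam Hp_pos Hp_sum).
have Sllm : Sl * lm <= 0 by apply: mulr_ge0_le0.
have Sulm : Su * lm <= 0 by apply: mulr_ge0_le0.
exists (expR (1 - (Su + Sl) * lm)); split.
  by rewrite expR_gt1 mulrDl; lra.
move=> ii Rb r R0 R1 r0 rlt oR or.
have rR : r < Rb by apply: lt_le_trans rlt _; apply: ler_piMl; [exact: ltW | exact: lmin_le1].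
rewrite (ratio_eq t Hlam Hp_pos Hp_sum r0 rR R1 oR or).
set X := \sum_(k < d) _.
have hX := fun k => T_bounds t s Hlam Hp_pos Hp_sum ii k r0 rR R1.
rewrite lmE in hX.
have Xup : X <= Su * (ln Rb - ln r - lm).
  rewrite -SuE' mulr_suml; apply: ler_sum => k _; by case/andP: (hX k).
have Xlo : Sl * (ln Rb - ln r + lm) <= X.
  rewrite -SlE' mulr_suml; apply: ler_sum => k _; by case/andP: (hX k).
have powE a : powR (Rb / r) a = expR (a * (ln Rb - ln r)).
  by rewrite /powR gt_eqF ?divr_gt0 // ln_div // posrE.
rewrite !powE -expRN -!expRD; split; rewrite ler_expR.
  move: Xlo; rewrite !(mulrDr, mulrDl, mulrN); lra.
move: Xup; rewrite !(mulrDr, mulrDl, mulrN); lra.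
Qed.
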